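(* Let $S$ be a semigroup with finite $\mathcal{R}$-height, let $a\in S$, and let $A=aS^1$. Let $I$ be a set with $|I|\geq 2$, fix $1\in I$, let $T=\mathcal{B}(S,I)$ be the Brandt extension of $S$ by $I$, and let $B=(1,a,1)T^1$. Then $\mathrm{H}_{\mathcal{R}}(T)=\mathrm{H}_{\mathcal{R}}(S)+1$ and $\mathrm{H}_{\mathcal{R}}(B)=\mathrm{H}_{\mathcal{R}}(A)+2$.
   Context: The Brandt extension $\mathcal{B}(S,I)$ of a semigroup $S$ by a non-empty set $I$ is the set $(I\times S\times I)\cup\{0\}$ with multiplication $(i,s,j)(k,t,l)=(i,st,l)$ if $j=k$ and $=0$ otherwise, and $0x=x0=0$ for all $x$. $S^1$ denotes $S$ with an identity adjoined if necessary. Green's preorder: $u\leq_{\mathcal{R}} v$ iff $uS^1\subseteq vS^1$; $\mathcal{R}$ is the associated equivalence; the $\mathcal{R}$-height $\mathrm{H}_{\mathcal{R}}$ of a semigroup is the supremum of cardinalities of chains in its poset of $\mathcal{R}$-classes. For the right ideals $A$ and $B$, the $\mathcal{R}$-height is computed in $A$ and $B$ as semigroups in their own right. *)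

(* Defs.v *)
(* Semigroups are given by a carrier type with an associative
   binary operation; subsemigroups (right ideals) by a predicate closed under
   the operation. *)
From Stdlib Require Import List Arith ClassicalEpsilon.
Import ListNotations.

Definition associative_op {X : Type} (op : X -> X -> X) : Prop :=
  forall x y z, op x (op y z) = op (op x y) z.

(* Green's R-preorder computed inside the semigroup with carrier P:
   u <=_R v  iff  u P^1 is contained in v P^1, i.e. u = v or u = v w, w in P. *)
Definition Rle {X : Type} (P : X -> Prop) (op : X -> X -> X) (u v : X) : Prop :=
  u = v \/ exists w, P w /\ u = op v w.

Definition Req {X : Type} (P : X -> Prop) (op : X -> X -> X) (u v : X) : Prop :=
  Rle P op u v /\ Rle P op v u.

(* A (finite) chain of R-classes, represented by a duplicate-free list of
   representatives: pairwise R-comparable, lying in pairwise distinct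
   R-classes.  Its cardinality is the length of the list. *)
Definition is_Rchain {X : Type} (P : X -> Prop) (op : X -> X -> X) (s : list X)
  : Prop :=
  NoDup s /\
  (forall x, In x s -> P x) /\
  (forall x y, In x s -> In y s ->
     (Rle P op x y \/ Rle P op y x) /\ (Req P op x y -> x = y)).

Definition RHeight {X : Type} (P : X -> Prop) (op : X -> X -> X) (n : nat) : Prop :=
  (exists s, is_Rchain P op s /\ length s = n) /\
  (forall s, is_Rchain P op s -> length s <= n).

(* Brandt extension B(S,I): None is the zero, Some (i,s,j) is the triple (i,s,j). *)
Definition brandt_mul {S I : Type} (mul : S -> S -> S)
  (x y : option (I * S * I)) : option (I * S * I) :=
  match x, y with
  | Some (i, s, j), Some (k, t, l) =>
      if excluded_middle_informative (j = k) then Some (i, mul s t, l) else None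
  | _, _ => None
  end.

Definition principal_right_ideal {X : Type} (op : X -> X -> X) (x : X) : X -> Prop :=
  fun y => y = x \/ exists t, y = op x t.

(* Main.v *)
Require Import Defs.
From Stdlib Require Import List Arith Lia ClassicalEpsilon.
Import ListNotations.

Lemma chain_nil {X} (P : X -> Prop) op : is_Rchain P op nil.
Proof. split; [constructor|split]; intros; simpl in *; contradiction. Qed.

Lemma NoDup_map_in {A B} (f : A -> B) l : NoDup l ->
  (forall x y, In x l -> In y l -> f x = f y -> x = y) -> NoDup (map f l).
Proof.
  induction l as [|x l IH]; intros Hnd Hinj; simpl; [constructor|].
  inversion Hnd; subst. constructor.
  - intro Hin. apply in_map_iff in Hin as [y [Hy Hyl]].
    assert (y = x) by (apply Hinj; simpl; auto). subst; contradiction.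
  - apply IH; auto. intros; apply Hinj; simpl; auto.
Qed.

Lemma filter_true_id {A} (l : list A) : filter (fun _ => true) l = l.
Proof. induction l; simpl; congruence. Qed.

Lemma filter_split_len {A} (q : A -> bool) l :
  length l = length (filter q l) + length (filter (fun x => negb (q x)) l).
Proof. induction l as [|x l IH]; simpl; [reflexivity|]. destruct (q x); simpl; lia. Qed.

Lemma chain_map {X Y} (PX : X -> Prop) opX (PY : Y -> Prop) opY (h : Y -> X) (q : Y -> bool) s :
  is_Rchain PY opY s ->
  (forall x, In x s -> q x = true -> PX (h x)) ->
  (forall x y, In x s -> In y s -> q x = true -> q y = true -> Rle PY opY x y -> Rle PX opX (h x) (h y)) ->
  (forall x y, In x s -> In y s -> q x = true -> q y = true -> Req PX opX (h x) (h y) -> x = y) ->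
  is_Rchain PX opX (map h (filter q s)).
Proof.
  intros [Hnd [HP Hc]] H1 H2 H3.
  split; [|split].
  - apply NoDup_map_in. apply NoDup_filter; auto.
    intros x y Hx Hy E. apply filter_In in Hx as [Hx qx]. apply filter_In in Hy as [Hy qy].
    apply H3; auto. rewrite E. split; left; reflexivity.
  - intros z Hz. apply in_map_iff in Hz as [x [<- Hx]]. apply filter_In in Hx as [Hx qx]. auto.
  - intros z1 z2 Hz1 Hz2.
    apply in_map_iff in Hz1 as [x [<- Hx]]. apply filter_In in Hx as [Hx qx].
    apply in_map_iff in Hz2 as [y [<- Hy]]. apply filter_In in Hy as [Hy qy].
    split.
    + destruct (Hc x y Hx Hy) as [[C|C] _]; [left|right]; apply H2; auto.
    + intro R. rewrite (H3 x y Hx Hy qx qy R). reflexivity.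
Qed.

Lemma chain_cons {X} (P : X -> Prop) op (z : X) s : is_Rchain P op s -> ~ In z s -> P z ->
  (forall y, In y s -> Rle P op z y \/ Rle P op y z) ->
  (forall y, In y s -> Req P op z y -> z = y) -> is_Rchain P op (z :: s).
Proof.
  intros [Hnd [HP Hc]] Hn Pz H3 H4.
  split; [constructor; auto|split].
  - intros x [<-|Hx]; auto.
  - intros x y [<-|Hx] [<-|Hy].
    + split; [left; left; reflexivity|auto].
    + split; [apply H3; auto| intro; apply H4; auto].
    + split; [destruct (H3 x Hx); auto| intros [R1 R2]; symmetry; apply H4; auto; split; auto].
    + apply Hc; auto.
Qed.

Lemma exists_min {X} (R : X -> X -> Prop) (l : list X) :
  (forall x y z, R x y -> R y z -> R x z) ->
  (forall x y, In x l -> In y l -> R x y \/ R y x) -> l <> nil ->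
  exists m, In m l /\ forall y, In y l -> R m y.
Proof.
  intros Htr. induction l as [|x l IH]; intros Hc Hne; [congruence|].
  assert (Rxx : R x x) by (destruct (Hc x x); simpl; auto).
  destruct l as [|x' l'].
  - exists x. split; [simpl; auto|]. intros y [<-|[]]; auto.
  - destruct IH as [m [Hm Hmin]]; [intros; apply Hc; simpl in *; auto| congruence|].
    destruct (Hc x m) as [C|C]; simpl in *; auto.
    + exists x. split; auto. intros y [<-|Hy]; eauto.
    + exists m. split; auto. intros y [<-|Hy]; auto.
Qed.

Lemma transfer {X Y} (PX : X -> Prop) opX (PY : Y -> Prop) opY c :
  (forall t, is_Rchain PX opX t -> exists s, is_Rchain PY opY s /\ length t + c <= length s) ->
  (forall s, is_Rchain PY opY s -> exists t, is_Rchain PX opX t /\ length s <= length t + c) ->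
  forall k, RHeight PY opY k <-> exists n, k = n + c /\ RHeight PX opX n.
Proof.
  intros F G k; split.
  - intros [[s [Hs Hl]] Hb].
    assert (Hc : c <= k).
    { destruct (F nil (chain_nil _ _)) as [s' [Hs' Hl']]. specialize (Hb s' Hs'). simpl in Hl'. lia. }
    exists (k - c). split; [lia|]. split.
    + destruct (G s Hs) as [t [Ht Hlt]]. exists t. split; auto.
      destruct (F t Ht) as [s' [H1 H2]]. specialize (Hb s' H1). lia.
    + intros t Ht. destruct (F t Ht) as [s' [H1 H2]]. specialize (Hb s' H1). lia.
  - intros [n [-> [[t [Ht Hl]] Hb]]]. split.
    + destruct (F t Ht) as [s [Hs Hls]]. exists s; split; auto.
      destruct (G s Hs) as [t' [Ht' H]]. specialize (Hb t' Ht'). lia.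
    + intros s Hs. destruct (G s Hs) as [t' [Ht' H]]. specialize (Hb t' Ht'). lia.
Qed.

Lemma bad_len2 {Z} (r : list (option Z)) : NoDup r ->
  (forall x y, In x r -> In y r -> x <> None -> y <> None -> x = y) -> length r <= 2.
Proof.
  intros Hnd H.
  destruct (excluded_middle_informative (exists x, In x r /\ x <> None)) as [[x [Hx Hxn]]|Hn].
  - change 2 with (length [None; x]). apply NoDup_incl_length; auto.
    intros y Hy. destruct y as [y|]; simpl; auto. right; left. symmetry; apply H; auto; congruence.
  - apply Nat.le_trans with (length [@None Z]); [|simpl; lia]. apply NoDup_incl_length; auto.
    intros y Hy. destruct y as [y|]; simpl; auto. exfalso; apply Hn; exists (Some y); split; auto; congruence.
Qed.

Lemma bm_same {S I} (mul : S -> S -> S) (i j l : I) s t :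
  brandt_mul mul (Some (i, s, j)) (Some (j, t, l)) = Some (i, mul s t, l).
Proof. unfold brandt_mul. destruct (excluded_middle_informative (j = j)) as [_|n]; [reflexivity|now elim n]. Qed.

Lemma bm_none_r {S I} (mul : S -> S -> S) (x : option (I * S * I)) : brandt_mul mul x None = None.
Proof. destruct x as [[[i s] j]|]; reflexivity. Qed.

Lemma bm_none_l {S I} (mul : S -> S -> S) (x : option (I * S * I)) : brandt_mul mul None x = None.
Proof. destruct x as [[[i s] j]|]; reflexivity. Qed.

Lemma rleT_fwd {S I} (mul : S -> S -> S) (P : option (I * S * I) -> Prop) i s j k t l :
  Rle P (brandt_mul mul) (Some (i, s, j)) (Some (k, t, l)) ->
  Some (i, s, j) = Some (k, t, l) \/ (i = k /\ exists u, P (Some (l, u, j)) /\ s = mul t u).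
Proof.
  intros [E|[w [Pw E]]]; [left; exact E|right].
  destruct w as [[[k' u] m]|]; [|rewrite bm_none_r in E; discriminate].
  unfold brandt_mul in E. destruct (excluded_middle_informative (l = k')) as [e|e]; [|discriminate].
  subst. inversion E; subst. split; [reflexivity|]. exists u; split; auto.
Qed.

Lemma rleT_fwd_S {S I} (mul : S -> S -> S) (i j k l : I) s t :
  Rle (fun _ => True) (brandt_mul mul) (Some (i, s, j)) (Some (k, t, l)) -> Rle (fun _ => True) mul s t.
Proof.
  intro R. apply rleT_fwd in R as [E|[_ [u [_ E]]]].
  - inversion E; left; reflexivity.
  - right; exists u; split; auto.
Qed.

Lemma part1_req {S I} (mul : S -> S -> S) (i j k l : I) u v :
  Rle (fun _ => True) (brandt_mul mul) (Some (i, u, j)) (Some (k, v, l)) ->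
  Req (fun _ => True) mul u v -> Req (fun _ => True) (brandt_mul mul) (Some (i, u, j)) (Some (k, v, l)).
Proof.
  intros R1 [_ R2]. split; auto.
  apply rleT_fwd in R1 as [E|[-> [w [_ Ew]]]]. { rewrite E; left; reflexivity. }
  right. destruct R2 as [E2|[w2 [_ E2]]].
  - exists (Some (j, w, l)). split; [exact Logic.I|]. rewrite bm_same. congruence.
  - exists (Some (j, w2, l)). split; [exact Logic.I|]. rewrite bm_same. congruence.
Qed.

Lemma memB_char {S I} (mul : S -> S -> S) a (i1 : I) y :
  principal_right_ideal (brandt_mul mul) (Some (i1, a, i1)) y ->
  y = None \/ exists u l, y = Some (i1, u, l) /\ principal_right_ideal mul a u.
Proof.
  intros [E|[z E]].
  - right; exists a, i1; split; auto; left; reflexivity.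
  - destruct z as [[[k u] l]|].
    + unfold brandt_mul in E. destruct (excluded_middle_informative (i1 = k)).
      * right; exists (mul a u), l; split; auto. right; exists u; reflexivity.
      * left; exact E.
    + left; rewrite bm_none_r in E; exact E.
Qed.

Lemma memB_ax {S I} (mul : S -> S -> S) a (i1 : I) x l :
  principal_right_ideal (brandt_mul mul) (Some (i1, a, i1)) (Some (i1, mul a x, l)).
Proof. right; exists (Some (i1, x, l)); rewrite bm_same; reflexivity. Qed.

Lemma memB_A {S I} (mul : S -> S -> S) a (i1 : I) u :
  principal_right_ideal mul a u ->
  principal_right_ideal (brandt_mul mul) (Some (i1, a, i1)) (Some (i1, u, i1)).
Proof. intros [->|[x ->]]; [left; reflexivity|apply memB_ax]. Qed.

Lemma memB_Aaa {S I} (mul : S -> S -> S) (Hassoc : associative_op mul) a (i1 : I) w l :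
  principal_right_ideal mul a w ->
  principal_right_ideal (brandt_mul mul) (Some (i1, a, i1)) (Some (i1, mul w (mul a a), l)).
Proof. intros [->|[x ->]]; [apply memB_ax|]. rewrite <- Hassoc. apply memB_ax. Qed.

Lemma memB_None {S I} (mul : S -> S -> S) a (i1 : I) :
  principal_right_ideal (brandt_mul mul) (Some (i1, a, i1)) None.
Proof. right; exists None; reflexivity. Qed.

Lemma rleA_to_B {S I} (mul : S -> S -> S) a (i1 : I) u v :
  Rle (principal_right_ideal mul a) mul u v ->
  Rle (principal_right_ideal (brandt_mul mul) (Some (i1, a, i1))) (brandt_mul mul)
      (Some (i1, u, i1)) (Some (i1, v, i1)).
Proof.
  intros [->|[w [Aw ->]]]; [left; reflexivity|].
  right; exists (Some (i1, w, i1)); split; [apply memB_A; auto|rewrite bm_same; reflexivity].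
Qed.

Lemma rleB_fwd_A {S I} (mul : S -> S -> S) a (i1 : I) i s j k t l :
  Rle (principal_right_ideal (brandt_mul mul) (Some (i1, a, i1))) (brandt_mul mul)
      (Some (i, s, j)) (Some (k, t, l)) ->
  Rle (principal_right_ideal mul a) mul s t.
Proof.
  intro R. apply rleT_fwd in R as [E|[_ [u [Bu E]]]].
  - inversion E; left; reflexivity.
  - apply memB_char in Bu as [D|[u' [l' [D Au]]]]; [discriminate|].
    inversion D; subst. right; exists u'; split; auto.
Qed.

Lemma rleA_trans {S} (mul : S -> S -> S) (Hassoc : associative_op mul) a x y z :
  Rle (principal_right_ideal mul a) mul x y -> Rle (principal_right_ideal mul a) mul y z ->
  Rle (principal_right_ideal mul a) mul x z.
Proof.
  intros [->|[w1 [A1 ->]]] [->|[w2 [A2 ->]]].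
  - left; reflexivity.
  - right; exists w2; auto.
  - right; exists w1; auto.
  - right; exists (mul w2 w1); split; [|symmetry; apply Hassoc].
    destruct A2 as [->|[t ->]]; right; [exists w1; reflexivity|exists (mul t w1); symmetry; apply Hassoc].
Qed.

Definition hS {S I} (a : S) (y : option (I * S * I)) : S :=
  match y with Some (_, u, _) => u | None => a end.

Definition q1 {S I} (y : option (I * S * I)) : bool :=
  match y with Some _ => true | None => false end.

Definition q2 {S I} (i1 : I) (y : option (I * S * I)) : bool :=
  match y with
  | Some (_, _, l) => if excluded_middle_informative (l = i1) then true else false
  | None => false end.

Lemma q2_inv {S I} (mul : S -> S -> S) a (i1 : I) y :
  principal_right_ideal (brandt_mul mul) (Some (i1, a, i1)) y -> q2 i1 y = true ->
  exists u, y = Some (i1, u, i1) /\ principal_right_ideal mul a u.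
Proof.
  intros By Hq. apply memB_char in By as [->|[u [l [-> Au]]]]; [discriminate|].
  simpl in Hq. destruct (excluded_middle_informative (l = i1)); [subst|discriminate].
  exists u; auto.
Qed.

Theorem theorem4p5
  (S : Type) (mul : S -> S -> S) (Hassoc : associative_op mul)
  (Hfin : exists n, RHeight (fun _ : S => True) mul n)
  (a : S) (I : Type) (i1 : I) (HI : exists i : I, i <> i1) :
  (forall k, RHeight (fun _ : option (I * S * I) => True) (brandt_mul mul) k <->
             exists n, k = n + 1 /\ RHeight (fun _ : S => True) mul n) /\
  (forall k, RHeight (principal_right_ideal (brandt_mul mul) (Some (i1, a, i1)))
                     (brandt_mul mul) k <->
             exists m, k = m + 2 /\ RHeight (principal_right_ideal mul a) mul m).
Proof.
  split.
  - refine (transfer _ _ _ _ 1 _ _).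
    + intros t Ht.
      assert (Hm : is_Rchain (fun _ => True) (brandt_mul mul)
                     (map (fun u => Some (i1, u, i1)) (filter (fun _ => true) t))).
      { apply chain_map with (PY := fun _ : S => True) (opY := mul); auto.
        - intros x y _ _ _ _ [E|[w [_ E]]]; [left; congruence|].
          right; exists (Some (i1, w, i1)); split; [exact Logic.I|rewrite bm_same; congruence].
        - intros x y Hx Hy _ _ [R1 R2]. apply rleT_fwd_S in R1, R2.
          destruct Ht as [_ [_ Hc]]. apply (Hc x y Hx Hy). split; auto. }
      rewrite filter_true_id in Hm.
      exists (None :: map (fun u => Some (i1, u, i1)) t). split; [|simpl; rewrite length_map; lia].
      apply chain_cons; auto.
      * intro H; apply in_map_iff in H as [? [E _]]; discriminate.
      * intros y _. left; right; exists None; split; [exact Logic.I|rewrite bm_none_r; reflexivity].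
      * intros y _ [_ [E|[w [_ E]]]]; [symmetry; exact E|rewrite bm_none_l in E; symmetry; exact E].
    + intros s Hs. exists (map (hS a) (filter q1 s)). split.
      * apply (chain_map _ _ _ _ _ _ _ Hs); auto.
        -- intros x y _ _ qx qy R.
           destruct x as [[[i u] j]|]; [|discriminate]. destruct y as [[[k v] l]|]; [|discriminate].
           eapply rleT_fwd_S; exact R.
        -- intros x y Hx Hy qx qy R.
           destruct x as [[[i u] j]|]; [|discriminate]. destruct y as [[[k v] l]|]; [|discriminate].
           simpl in R. destruct Hs as [_ [_ Hc]]. destruct (Hc _ _ Hx Hy) as [[C|C] Heq]; apply Heq.
           ++ apply part1_req; auto.
           ++ destruct (part1_req _ _ _ _ _ _ _ C (conj (proj2 R) (proj1 R))). split; auto.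
      * rewrite length_map, (filter_split_len q1 s).
        assert (length (filter (fun x => negb (q1 x)) s) <= length [@None (I * S * I)]); [|simpl in *; lia].
        apply NoDup_incl_length; [apply NoDup_filter; apply Hs|].
        intros y Hy; apply filter_In in Hy as [_ Hq]. destruct y as [[[? ?] ?]|]; simpl in *; [discriminate|auto].
  - refine (transfer _ _ _ _ 2 _ _).
    + intros t Ht.
      assert (Ht2 : exists t', is_Rchain (principal_right_ideal mul a) mul t' /\ length t <= length t' /\ t' <> nil).
      { destruct t as [|x t0].
        - exists [a]. split; [|simpl; split; [lia|congruence]].
          split; [constructor; [simpl; tauto|constructor]|split].
          + intros x [<-|[]]; left; reflexivity.
          + intros x y [<-|[]] [<-|[]]; split; [left; left; reflexivity|auto].
        - exists (x :: t0); split; auto; split; [lia|congruence]. }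
      destruct Ht2 as [t' [Ht' [Hlen Hne]]].
      enough (G : exists s, is_Rchain (principal_right_ideal (brandt_mul mul) (Some (i1, a, i1))) (brandt_mul mul) s /\ length t' + 2 <= length s).
      { destruct G as [s [G1 G2]]. exists s; split; auto; lia. }
      clear t Ht Hlen. rename t' into t. rename Ht' into Ht.
      destruct (exists_min (Rle (principal_right_ideal mul a) mul) t (rleA_trans mul Hassoc a))
        as [m [Hm Hmin]]; [intros; apply Ht; auto|auto|].
      destruct HI as [i2 Hi2].
      assert (Hmp : is_Rchain (principal_right_ideal (brandt_mul mul) (Some (i1, a, i1))) (brandt_mul mul)
                     (map (fun u => Some (i1, u, i1)) (filter (fun _ => true) t))).
      { apply chain_map with (PY := principal_right_ideal mul a) (opY := mul); auto.
        - intros x Hx _. apply memB_A. apply Ht; auto.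
        - intros x y _ _ _ _ R. apply rleA_to_B; auto.
        - intros x y Hx Hy _ _ [R1 R2]. apply rleB_fwd_A in R1, R2.
          destruct Ht as [_ [_ Hc]]. apply (Hc x y Hx Hy). split; auto. }
      rewrite filter_true_id in Hmp.
      exists (None :: Some (i1, mul m (mul a a), i2) :: map (fun u => Some (i1, u, i1)) t).
      split; [|simpl; rewrite length_map; lia].
      apply chain_cons; [apply chain_cons| | | |]; auto.
      * intro H; apply in_map_iff in H as [u [E _]]. inversion E; subst; auto.
      * apply memB_Aaa; auto. apply Ht; auto.
      * intros y Hy. apply in_map_iff in Hy as [u [<- Hu]]. left.
        destruct (Hmin u Hu) as [->|[w [Aw ->]]].
        -- right; exists (Some (i1, mul a a, i2)); split; [apply memB_ax|rewrite bm_same; reflexivity].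
        -- right; exists (Some (i1, mul w (mul a a), i2)); split; [apply memB_Aaa; auto|].
           rewrite bm_same, (Hassoc u w (mul a a)). reflexivity.
      * intros y Hy [_ R]. apply in_map_iff in Hy as [u [<- Hu]].
        apply rleT_fwd in R as [E|[_ [w [Bw _]]]].
        -- inversion E; subst; contradiction.
        -- apply memB_char in Bw as [D|[u' [l' [D _]]]]; [discriminate|]. inversion D; subst; contradiction.
      * intros [E|H]; [discriminate|]. apply in_map_iff in H as [? [E _]]; discriminate.
      * apply memB_None.
      * intros y _. left; right; exists None; split; [apply memB_None|rewrite bm_none_r; reflexivity].
      * intros y _ [_ [E|[w [_ E]]]]; [symmetry; exact E|rewrite bm_none_l in E; symmetry; exact E].
    + intros s Hs. exists (map (hS a) (filter (q2 i1) s)). split.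
      * destruct Hs as [Hnd [HP Hc]].
        apply (chain_map _ _ _ _ _ _ _ (conj Hnd (conj HP Hc))).
        -- intros x Hx Hq. destruct (q2_inv mul a i1 x (HP x Hx) Hq) as [u [-> Au]]. exact Au.
        -- intros x y Hx Hy qx qy R.
           destruct (q2_inv mul a i1 x (HP x Hx) qx) as [u [-> _]].
           destruct (q2_inv mul a i1 y (HP y Hy) qy) as [v [-> _]].
           eapply rleB_fwd_A; exact R.
        -- intros x y Hx Hy qx qy [R1 R2].
           destruct (q2_inv mul a i1 x (HP x Hx) qx) as [u [-> _]].
           destruct (q2_inv mul a i1 y (HP y Hy) qy) as [v [-> _]].
           apply (Hc _ _ Hx Hy). split; apply rleA_to_B; auto.
      * rewrite length_map, (filter_split_len (q2 i1) s).
        assert (length (filter (fun x => negb (q2 i1 x)) s) <= 2); [|lia].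
        destruct Hs as [Hnd [HP Hc]].
        apply bad_len2; [apply NoDup_filter; auto|].
        intros x y Hx Hy nx ny.
        apply filter_In in Hx as [Hx qx]. apply filter_In in Hy as [Hy qy].
        destruct x as [[[i u] j]|]; [|congruence]. destruct y as [[[k v] l]|]; [|congruence].
        simpl in qx, qy.
        destruct (excluded_middle_informative (j = i1)); [discriminate|].
        destruct (excluded_middle_informative (l = i1)); [discriminate|].
        destruct (Hc _ _ Hx Hy) as [[R|R] _].
        -- apply rleT_fwd in R as [E|[_ [w [Bw _]]]]; [exact E|].
           apply memB_char in Bw as [D|[u' [l' [D _]]]]; [discriminate|]. inversion D; subst; contradiction.
        -- apply rleT_fwd in R as [E|[_ [w [Bw _]]]]; [symmetry; exact E|].
           apply memB_char in Bw as [D|[u' [l' [D _]]]]; [discriminate|]. inversion D; subst; contradiction.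
Qed.
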